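(* For $0\le i,j\le n-1$, $n\in\mathbb{N}$ and $a,q>0$, $$\frac{Z^{\mathrm{col}}(i,j,a,q,n)}{Z^{\mathrm{col}}_n(a,q)}=\frac{1}{(2\pi\mathrm{i})^2}\int_{\Gamma_0}\int_{\Gamma_0}q^{(i+1)^2+j}\frac{G^{\mathrm{diag}}_{NE}(w,b,a,q)}{w^ib^j}\frac{dw}{w}\frac{db}{b},$$ where $\Gamma_0$ is a contour around the origin.
   Context: $\mathrm{i}=\sqrt{-1}$. Aztec diamond of size $n$: white vertices $\{(x_1,x_2): x_1\text{ odd},\ x_2\text{ even},\ 1\le x_1\le 2n-1,\ 0\le x_2\le 2n\}$, black vertices $\{(x_1,x_2): x_1\text{ even},\ x_2\text{ odd},\ 0\le x_1\le 2n,\ 1\le x_2\le 2n-1\}$, $e_1=(1,1)$, $e_2=(-1,1)$. The $q^{\mathrm{col}}$ weighting: for a black vertex $x=(x_1,x_2)$, the edges to $x\pm e_1$ have weight $1$, the edge to $x+e_2$ has weight $aq^{-2n+x_1-1}$ and the edge to $x-e_2$ has weight $aq^{2n-x_1}$. $Z^{\mathrm{col}}_n(a,q)$ is the sum over perfect matchings of products of weights, and $Z^{\mathrm{col}}(i,j,a,q,n)$ the same for the graph with vertices $(2n-2i-1,2n)$ and $(2n,2n-1-2j)$ removed. The $q^{\mathrm{diag}}$ weighting (with $b=1$): for $0\le k,l\le n-1$, edges $\{(2n-2k-2,2n-2l-1),(2n-2k-1,2n-2l)\}$ and $\{(2n-2k-1,2n-2l-2),(2n-2k,2n-2l-1)\}$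 have weight $1$, edge $\{(2n-2k-1,2n-2l),(2n-2k,2n-2l-1)\}$ has weight $aq^{-2\min(k,l)}$, and edge $\{(2n-2k-2,2n-2l-1),(2n-2k-1,2n-2l-2)\}$ has weight $aq^{2\min(k,l)+1}$; $Z^{\mathrm{diag}}_n(1,a,q)$ and $Z^{\mathrm{diag}}(i,j,a,q,n)$ are the corresponding partition functions (the latter with $(2n-2i-1,2n)$, $(2n,2n-2j-1)$ removed), and $G^{\mathrm{diag}}_{NE}(w,b,a,q)=\sum_{i,j=0}^{n-1}\frac{Z^{\mathrm{diag}}(i,j,a,q,n)}{Z^{\mathrm{diag}}_n(1,a,q)}w^ib^j$. *)

(* Defs.v *)
From Stdlib Require Import Reals.
From Coquelicot Require Import Coquelicot.
From mathcomp Require Import all_boot.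

Set Implicit Arguments.
Unset Strict Implicit.
Unset Printing Implicit Defensive.
Local Open Scope R_scope.

Definition pt (n : nat) : finType := ('I_(n.*2.+1) * 'I_(n.*2.+1))%type.

Definition mkpt (n x1 x2 : nat) : pt n := (inord x1, inord x2).

Definition whites (n : nat) : {set pt n} :=
  [set x : pt n | odd x.1 && ~~ odd x.2].
Definition blacks (n : nat) : {set pt n} :=
  [set x : pt n | ~~ odd x.1 && odd x.2].

(* relative position of a white vertex y w.r.t. a black vertex x,
   with e1 = (1,1), e2 = (-1,1) *)
Definition is_pe1 n (x y : pt n) : bool := (y.1 == x.1.+1 :> nat) && (y.2 == x.2.+1 :> nat).
Definition is_me1 n (x y : pt n) : bool := (y.1.+1 == x.1 :> nat) && (y.2.+1 == x.2 :> nat).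
Definition is_pe2 n (x y : pt n) : bool := (y.1.+1 == x.1 :> nat) && (y.2 == x.2.+1 :> nat).
Definition is_me2 n (x y : pt n) : bool := (y.1 == x.1.+1 :> nat) && (y.2.+1 == x.2 :> nat).

Definition adj n (x y : pt n) : bool :=
  [|| is_pe1 x y, is_me1 x y, is_pe2 x y | is_me2 x y].

Definition perfect_matching n (Bs Ws : {set pt n}) (M : {set pt n * pt n}) : bool :=
  [&& [forall e in M, [&& e.1 \in Bs, e.2 \in Ws & adj e.1 e.2]],
      [forall x in Bs, #|[set e in M | e.1 == x]| == 1%N] &
      [forall y in Ws, #|[set e in M | e.2 == y]| == 1%N]].

Definition partfun n (wt : pt n -> pt n -> R) (Bs Ws : {set pt n}) : R :=
  \big[Rplus/R0]_(M : {set pt n * pt n} | perfect_matching Bs Ws M)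
     \big[Rmult/R1]_(e <- enum M) wt e.1 e.2.

Definition wcol n (a q : R) (x y : pt n) : R :=
  if is_pe2 x y then (a * powerRZ q (- 2 * Z.of_nat n + Z.of_nat x.1 - 1)%Z)
  else if is_me2 x y then (a * powerRZ q (2 * Z.of_nat n - Z.of_nat x.1)%Z)
  else R1.

(* q^diag weighting with b = 1.  For a black vertex x = (x1,x2) write
   l = (2n-1-x2)/2.  Edge to x + e2 = {(2n-2k-1,2n-2l),(2n-2k,2n-2l-1)}
   with k = (2n-x1)/2 has weight a q^{-2 min(k,l)}; edge to x - e2 =
   {(2n-2k-2,2n-2l-1),(2n-2k-1,2n-2l-2)} with k = (2n-2-x1)/2 has weight
   a q^{2 min(k,l)+1}; edges to x +- e1 have weight 1. *)
Definition wdiag n (a q : R) (x y : pt n) : R :=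
  let l := ((n.*2 - 1 - x.2)./2)%N in
  if is_pe2 x y then
    (a * powerRZ q (- (2 * Z.of_nat (minn ((n.*2 - x.1)./2) l)))%Z)
  else if is_me2 x y then
    (a * powerRZ q (2 * Z.of_nat (minn ((n.*2 - 2 - x.1)./2) l) + 1)%Z)
  else R1.

Definition rem_white n (i : nat) : pt n := mkpt n (n.*2 - i.*2 - 1)%N n.*2.
Definition rem_black n (j : nat) : pt n := mkpt n n.*2 (n.*2 - 1 - j.*2)%N.

Arguments wcol : clear implicits.
Arguments wdiag : clear implicits.
Arguments rem_white : clear implicits.
Arguments rem_black : clear implicits.

Definition Zcol_n (n : nat) (a q : R) : R := partfun (wcol n a q) (blacks n) (whites n).
Definition Zcol (i j : nat) (a q : R) (n : nat) : R :=
  partfun (wcol n a q) (blacks n :\ rem_black n j) (whites n :\ rem_white n i).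

Definition Zdiag_n (n : nat) (a q : R) : R := partfun (wdiag n a q) (blacks n) (whites n).
Definition Zdiag (i j : nat) (a q : R) (n : nat) : R :=
  partfun (wdiag n a q) (blacks n :\ rem_black n j) (whites n :\ rem_white n i).

Definition GdiagNE (n : nat) (w b : C) (a q : R) : C :=
  \big[Cplus/RtoC 0]_(i < n) \big[Cplus/RtoC 0]_(j < n)
     Cmult (RtoC (Zdiag i j a q n / Zdiag_n n a q))
           (Cmult (Cpow w i) (Cpow b j)).

(* contour integral over the positively oriented circle |z| = r:
   \oint f(z) dz = \int_0^{2 pi} f(r e^{it}) i r e^{it} dt *)
Definition circ (r t : R) : C := (r * cos t, r * sin t).
Definition circle_integral (r : R) (f : C -> C) : C :=
  RInt (V := C_R_CompleteNormedModule)
       (fun t => Cmult (f (circ r t)) (Cmult Ci (circ r t))) 0 (2 * PI).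

(* Main.v *)
Require Import Defs.
From Stdlib Require Import Reals Lia Lra ZArith.
From Coquelicot Require Import Coquelicot.
From mathcomp Require Import all_boot.
From mathcomp Require Import zify.
From HB Require Import structures.

Lemma Rplus_A : associative Rplus. Proof. by move=> x y z; rewrite Rplus_assoc. Qed.
Lemma Rmult_A : associative Rmult. Proof. by move=> x y z; rewrite Rmult_assoc. Qed.
Lemma Cplus_A : associative Cplus. Proof. by move=> x y z; rewrite Cplus_assoc. Qed.
Lemma Cmult_A : associative Cmult. Proof. by move=> x y z; rewrite Cmult_assoc. Qed.
HB.instance Definition _ := Monoid.isComLaw.Build R R0 Rplus Rplus_A Rplus_comm Rplus_0_l.
HB.instance Definition _ := Monoid.isComLaw.Build R R1 Rmult Rmult_A Rmult_comm Rmult_1_l.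
HB.instance Definition _ := Monoid.isMulLaw.Build R R0 Rmult Rmult_0_l Rmult_0_r.
HB.instance Definition _ := Monoid.isAddLaw.Build R Rmult Rplus Rmult_plus_distr_r Rmult_plus_distr_l.
HB.instance Definition _ := Monoid.isComLaw.Build C (RtoC 0) Cplus Cplus_A Cplus_comm Cplus_0_l.
HB.instance Definition _ := Monoid.isComLaw.Build C (RtoC 1) Cmult Cmult_A Cmult_comm Cmult_1_l.
Lemma Cm0l : left_zero (RtoC 0) Cmult. Proof. by move=> x; rewrite Cmult_0_l. Qed.
Lemma Cm0r : right_zero (RtoC 0) Cmult. Proof. by move=> x; rewrite Cmult_0_r. Qed.
HB.instance Definition _ := Monoid.isMulLaw.Build C (RtoC 0) Cmult Cm0l Cm0r.
HB.instance Definition _ := Monoid.isAddLaw.Build C Cmult Cplus Cmult_plus_distr_r Cmult_plus_distr_l.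

Section Helpers.
Local Open Scope R_scope.

Lemma prod_match1 n (Bs Ws : {set pt n}) M (f : pt n -> R) :
  perfect_matching Bs Ws M ->
  \big[Rmult/R1]_(e in M) f e.1 = \big[Rmult/R1]_(x in Bs) f x.
Proof.
move=> /and3P[/forallP H1 /forallP H2 _].
rewrite (partition_big (fun e => e.1) (fun x => x \in Bs)); last first.
  by move=> e eM; have := H1 e; rewrite eM => /and3P[].
apply: eq_bigr => x xB.
have := H2 x; rewrite xB /= => /cards1P[e0 He0].
have e0S : e0 \in [set e in M | e.1 == x] by rewrite He0 set11.
rewrite inE in e0S; case/andP: e0S => _ /eqP e0x.
rewrite (eq_bigl (fun e => e \in [set e0])); last first.
  by move=> e; rewrite -He0 inE.
by rewrite big_set1 e0x.
Qed.

Lemma prod_match2 n (Bs Ws : {set pt n}) M (f : pt n -> R) :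
  perfect_matching Bs Ws M ->
  \big[Rmult/R1]_(e in M) f e.2 = \big[Rmult/R1]_(x in Ws) f x.
Proof.
move=> /and3P[/forallP H1 _ /forallP H2].
rewrite (partition_big (fun e => e.2) (fun x => x \in Ws)); last first.
  by move=> e eM; have := H1 e; rewrite eM => /and3P[].
apply: eq_bigr => x xB.
have := H2 x; rewrite xB /= => /cards1P[e0 He0].
have e0S : e0 \in [set e in M | e.2 == x] by rewrite He0 set11.
rewrite inE in e0S; case/andP: e0S => _ /eqP e0x.
rewrite (eq_bigl (fun e => e \in [set e0])); last first.
  by move=> e; rewrite -He0 inE.
by rewrite big_set1 e0x.
Qed.

Lemma partfun_gauge n (wt1 wt2 : pt n -> pt n -> R) (f g : pt n -> R) (Bs Ws : {set pt n}) :
  (forall x y, x \in Bs -> y \in Ws -> adj x y -> wt1 x y = f x * g y * wt2 x y) ->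
  partfun wt1 Bs Ws =
  \big[Rmult/R1]_(x in Bs) f x * \big[Rmult/R1]_(y in Ws) g y * partfun wt2 Bs Ws.
Proof.
move=> Hw; rewrite /partfun big_distrr /=.
apply: eq_bigr => M pm.
rewrite !big_enum.
rewrite (eq_bigr (fun e => f e.1 * g e.2 * wt2 e.1 e.2)); last first.
  move=> e eM; case/and3P: (pm) => /forallP H1 _ _.
  by have := H1 e; rewrite eM => /and3P[a b c]; apply: Hw.
by rewrite !big_split /= (@prod_match1 _ _ _ _ f pm) (@prod_match2 _ _ _ _ g pm).
Qed.

Definition Fz (n s : Z) : Z := if (s <=? n)%Z then ((n - s) * (n - s) - 1)%Z else (n - 1 - s)%Z.

Lemma Fnat (n s : nat) :
  (Z.of_nat ((n - s) * (n - s)) - Z.of_nat (s - n) - 1)%Z = Fz (Z.of_nat n) (Z.of_nat s).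
Proof.
rewrite /Fz; case: (Z.leb_spec (Z.of_nat s) (Z.of_nat n)) => h.
  have hs : (s <= n)%N by lia.
  rewrite Nat2Z.inj_mul (_ : (s - n)%N = 0%N); last by lia.
  rewrite Nat2Z.inj_sub; last by lia.
  lia.
have hs : (n < s)%N by lia.
rewrite (_ : (n - s)%N = 0%N); last by lia.
lia.
Qed.

Lemma key_pe2 (N P V S T M E : Z) : (1 <= P <= N)%Z -> (0 <= V <= N - 1)%Z ->
  S = (P + V)%Z -> T = (S - 1)%Z -> M = Z.min (N - P) V -> E = (- 2 * N + 2 * P - 1)%Z ->
  E = (Fz N S + - Fz N T + - (2 * M))%Z.
Proof.
move=> h1 h2 -> -> -> ->; rewrite /Fz.
case: (Z.leb_spec (P + V) N) => h3; case: (Z.leb_spec (P + V - 1) N) => h4; nia.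
Qed.

Lemma key_me2 (N P V S T M E : Z) : (0 <= P <= N - 1)%Z -> (0 <= V <= N - 1)%Z ->
  S = (P + V)%Z -> T = (S + 1)%Z -> M = Z.min (N - 1 - P) V -> E = (2 * N - 2 * P)%Z ->
  E = (Fz N S + - Fz N T + (2 * M + 1))%Z.
Proof.
move=> h1 h2 -> -> -> ->; rewrite /Fz.
case: (Z.leb_spec (P + V) N) => h3; case: (Z.leb_spec (P + V + 1) N) => h4; nia.
Qed.

Definition Fexp n (x : pt n) : Z :=
  Fz (Z.of_nat n) (Z.of_nat (x.1./2 + (n - 1 - x.2./2))).
Definition Gexp n (y : pt n) : Z :=
  (- Fz (Z.of_nat n) (Z.of_nat (y.1./2 + (n - y.2./2))))%Z.

Lemma gauge n a q (x y : pt n) : 0 < q -> x \in blacks n -> y \in whites n -> adj x y ->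
  wcol n a q x y = powerRZ q (Fexp n x) * powerRZ q (Gexp n y) * wdiag n a q x y.
Proof.
case: x => x1 x2; case: y => y1 y2.
move=> q0; rewrite !inE /= => /andP[ox1 ox2] /andP[oy1 oy2] hadj.
rewrite -powerRZ_add; last lra.
have b1 := ltn_ord x1; have b2 := ltn_ord x2.
have b3 := ltn_ord y1; have b4 := ltn_ord y2.
rewrite /wcol /wdiag /Fexp /Gexp; cbn [fst snd].
case E2: (is_pe2 (x1, x2) (y1, y2)).
  move: E2 => /andP[/eqP k1 /eqP k2]; move: k1 k2; cbn [fst snd] => k1 k2.
  rewrite -Rmult_assoc (Rmult_comm (powerRZ _ _) a) Rmult_assoc -powerRZ_add; last lra.
  congr (_ * powerRZ q _).
  apply: (key_pe2 _ (Z.of_nat x1./2) (Z.of_nat (n - 1 - x2./2))); lia.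
case E3: (is_me2 (x1, x2) (y1, y2)).
  move: E3 => /andP[/eqP k1 /eqP k2]; move: k1 k2; cbn [fst snd] => k1 k2.
  rewrite -Rmult_assoc (Rmult_comm (powerRZ _ _) a) Rmult_assoc -powerRZ_add; last lra.
  congr (_ * powerRZ q _).
  apply: (key_me2 _ (Z.of_nat x1./2) (Z.of_nat (n - 1 - x2./2))); lia.
rewrite Rmult_1_r.
have -> : Z.of_nat (y1./2 + (n - y2./2)) = Z.of_nat (x1./2 + (n - 1 - x2./2)).
  move: hadj; rewrite /adj E2 E3 !orbF => /orP[] /andP[/eqP k1 /eqP k2]; move: k1 k2; cbn [fst snd] => k1 k2; lia.
by rewrite Z.add_opp_diag_r.
Qed.

Lemma prod_pos n (A : {set pt n}) (q : R) (F : pt n -> Z) : 0 < q ->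
  0 < \big[Rmult/R1]_(x in A) powerRZ q (F x).
Proof.
move=> q0; apply: (big_ind (fun x => 0 < x)); [lra| |].
  by move=> x y hx hy; apply: Rmult_lt_0_compat.
by move=> x _; apply: powerRZ_lt.
Qed.

Lemma partfun_split n (wt1 wt2 : pt n -> pt n -> R) (f g : pt n -> R) (Bs Ws : {set pt n}) b w :
  (forall x y, x \in Bs -> y \in Ws -> adj x y -> wt1 x y = f x * g y * wt2 x y) ->
  b \in Bs -> w \in Ws ->
  partfun wt1 Bs Ws =
  f b * g w * (\big[Rmult/R1]_(x in Bs :\ b) f x * \big[Rmult/R1]_(y in Ws :\ w) g y) * partfun wt2 Bs Ws
  /\
  partfun wt1 (Bs :\ b) (Ws :\ w) =
  \big[Rmult/R1]_(x in Bs :\ b) f x * \big[Rmult/R1]_(y in Ws :\ w) g y * partfun wt2 (Bs :\ b) (Ws :\ w).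
Proof.
move=> H bB wW; split.
  rewrite (@partfun_gauge _ _ _ _ _ _ _ H) (bigD1 b bB) (bigD1 w wW) /=.
  rewrite (eq_bigl (fun x => x \in Bs :\ b)); last by move=> x; rewrite in_setD1 andbC.
  rewrite (eq_bigl (fun x => x \in Ws :\ w) (fun y => g y)); last by move=> x; rewrite in_setD1 andbC.
  set A := \big[Rmult/R1]_(x in Bs :\ b) f x; set B := \big[Rmult/R1]_(y in Ws :\ w) g y.
  set Z2 := partfun wt2 Bs Ws; clearbody A B Z2; ring.
apply: partfun_gauge => x y; rewrite !in_setD1 => /andP[_ hx] /andP[_ hy]; exact: H.
Qed.

Lemma rb_in n j : (j < n)%N -> rem_black n j \in blacks n.
Proof.
move=> jn; rewrite /rem_black /mkpt inE; cbn [fst snd]; rewrite !inordK; lia.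
Qed.

Lemma rw_in n i : (i < n)%N -> rem_white n i \in whites n.
Proof.
move=> jn; rewrite /rem_white /mkpt inE; cbn [fst snd]; rewrite !inordK; lia.
Qed.

Lemma exp_sum n i j : (i < n)%N -> (j < n)%N ->
  (- Fexp n (rem_black n j) + - Gexp n (rem_white n i))%Z = Z.of_nat ((i + 1) ^ 2 + j).
Proof.
move=> hi hj; rewrite /Fexp /Gexp /rem_black /rem_white /mkpt; cbn [fst snd]; rewrite !inordK; try lia.
rewrite -mulnn.
have -> : Z.of_nat ((n.*2)./2 + (n - 1 - (n.*2 - 1 - j.*2)./2)) = (Z.of_nat n + Z.of_nat j)%Z by lia.
have -> : Z.of_nat ((n.*2 - i.*2 - 1)./2 + (n - (n.*2)./2)) = (Z.of_nat n - 1 - Z.of_nat i)%Z by lia.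
rewrite /Fz; case: Z.leb_spec => h1; case: Z.leb_spec => h2; nia.
Qed.

Lemma ratio i j a q n : (i < n)%N -> (j < n)%N -> 0 < q ->
  Zcol i j a q n / Zcol_n n a q =
  powerRZ q (Z.of_nat ((i + 1) ^ 2 + j)) * (Zdiag i j a q n / Zdiag_n n a q).
Proof.
move=> hi hj q0.
have H : forall x y, x \in blacks n -> y \in whites n -> adj x y ->
   wcol n a q x y = powerRZ q (Fexp n x) * powerRZ q (Gexp n y) * wdiag n a q x y.
  by move=> x y; apply: gauge.
have [E1 E2] := @partfun_split _ _ _ _ _ _ _ _ _ H (@rb_in _ _ hj) (@rw_in _ _ hi).
rewrite /Zcol /Zcol_n /Zdiag /Zdiag_n E1 E2.
set A := \big[Rmult/R1]_(x in _) _.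
set B := \big[Rmult/R1]_(y in _) _.
have A0 : 0 < A by apply: prod_pos.
have B0 : 0 < B by apply: prod_pos.
rewrite -(@exp_sum n i j) // powerRZ_add; last lra.
rewrite !powerRZ_neg'.
have f0 := powerRZ_lt q (Fexp n (rem_black n j)) q0.
have g0 := powerRZ_lt q (Gexp n (rem_white n i)) q0.
set f := powerRZ q _ in f0 *; set g := powerRZ q _ in g0 *.
set Z1 := partfun _ _ _; set Z2 := partfun _ _ _.
clearbody A B f g Z1 Z2.
rewrite /Rdiv !Rinv_mult.
set iz := / Z2; clearbody iz.
field; repeat split; try lra; apply: Rgt_not_eq; exact: powerRZ_lt.
Qed.

Lemma is_RInt_Cmult (al : C) (f : R -> C) a b (l : C) :
  is_RInt (V := C_R_CompleteNormedModule) f a b l ->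
  is_RInt (V := C_R_CompleteNormedModule) (fun t => Cmult al (f t)) a b (Cmult al l).
Proof.
move=> H.
have H1 := is_RInt_fct_extend_fst _ _ _ _ H.
have H2 := is_RInt_fct_extend_snd _ _ _ _ H.
case: al => ar ai; case: l H H1 H2 => lr li H H1 H2.
rewrite /Cmult /=.
apply: is_RInt_fct_extend_pair => /=.
  apply: (is_RInt_ext (fun t => plus (scal ar (fst (f t))) (opp (scal ai (snd (f t)))))).
    by move=> x _; rewrite /plus /opp /scal /= /mult /=; ring.
  apply: is_RInt_plus; [apply: is_RInt_scal | apply: is_RInt_opp; apply: is_RInt_scal]; done.
apply: (is_RInt_ext (fun t => plus (scal ar (snd (f t))) (scal ai (fst (f t))))).
  by move=> x _; rewrite /plus /opp /scal /= /mult /=; ring.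
apply: is_RInt_plus; apply: is_RInt_scal; done.
Qed.

Definition E (k : Z) (t : R) : C := (cos (IZR k * t), sin (IZR k * t)).
Definition I2 (k : Z) : C := if (k =? 0)%Z then RtoC (2 * PI) else RtoC 0.

Lemma sin_2k k : sin (IZR k * (2 * PI)) = 0.
Proof. apply: sin_eq_0_1; exists (2 * k)%Z; rewrite mult_IZR; ring. Qed.

Lemma cos_2k k : cos (IZR k * (2 * PI)) = 1.
Proof.
have -> : IZR k * (2 * PI) = 2 * (IZR k * PI) by ring.
rewrite cos_2a_sin (sin_eq_0_1 (IZR k * PI)); last by exists k.
ring.
Qed.

Lemma is_RInt_E k : is_RInt (V := C_R_CompleteNormedModule) (E k) 0 (2 * PI) (I2 k).
Proof.
rewrite /I2; case: (Z.eqb_spec k 0) => hk.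
  subst k.
  apply: (is_RInt_ext (fun _ => RtoC 1)).
    by move=> x _; rewrite /E Rmult_0_l cos_0 sin_0.
  have := is_RInt_const (V := C_R_CompleteNormedModule) 0 (2 * PI) (RtoC 1).
  have -> : @scal _ C_R_CompleteNormedModule (2 * PI - 0) (RtoC 1) = RtoC (2 * PI).
    rewrite /scal /= /prod_scal /= /scal /= /mult /=; rewrite /RtoC; f_equal; ring.
  done.
have kz : IZR k <> 0 by apply: not_0_IZR.
have -> : RtoC 0 = (0, 0) by [].
apply: is_RInt_fct_extend_pair => /=.
  have := is_RInt_derive (V := R_CompleteNormedModule) (fun t => sin (IZR k * t) / IZR k)
     (fun t => cos (IZR k * t)) 0 (2 * PI).
  rewrite /minus /plus /opp /= sin_2k Rmult_0_r sin_0.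
  have -> : 0 / IZR k + - (0 / IZR k) = 0 by field.
  apply.
    move=> x _; auto_derive => //; field; done.
  move=> x _; apply: ex_derive_continuous; auto_derive => //.
have := is_RInt_derive (V := R_CompleteNormedModule) (fun t => - cos (IZR k * t) / IZR k)
   (fun t => sin (IZR k * t)) 0 (2 * PI).
rewrite /minus /plus /opp /= cos_2k Rmult_0_r cos_0.
have -> : - 1 / IZR k + - (- 1 / IZR k) = 0 by field.
apply.
  move=> x _; auto_derive => //; field; done.
move=> x _; apply: ex_derive_continuous; auto_derive => //.
Qed.

Definition Pz (r : R) (k : Z) (t : R) : C := Cmult (RtoC (powerRZ r k)) (E k t).

Lemma E_mul a b t : Cmult (E a t) (E b t) = E (a + b) t.
Proof.
rewrite /E plus_IZR Rmult_plus_distr_r cos_plus sin_plus /Cmult /=; f_equal; ring.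
Qed.

Lemma Pz_mul r a b t : r <> 0 -> Cmult (Pz r a t) (Pz r b t) = Pz r (a + b) t.
Proof.
move=> r0; rewrite /Pz -E_mul powerRZ_add // RtoC_mult.
set x := E a t; set y := E b t; ring.
Qed.

Lemma Pz0 r t : Pz r 0 t = RtoC 1.
Proof. by rewrite /Pz /E Rmult_0_l cos_0 sin_0 /=; apply: injective_projections => /=; ring. Qed.

Lemma Pz_nz r k t : r <> 0 -> Pz r k t <> RtoC 0.
Proof.
move=> r0 h; have := Pz_mul r k (- k) t r0.
rewrite h Cmult_0_l Z.add_opp_diag_r Pz0 => /pair_equal_spec[] /=; lra.
Qed.

Lemma Pz_inv r k t : r <> 0 -> Cinv (Pz r k t) = Pz r (- k) t.
Proof.
move=> r0; have h := Pz_mul r k (- k) t r0.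
rewrite Z.add_opp_diag_r Pz0 in h.
have nz := Pz_nz r k t r0.
move: h nz; set X := Pz r k t; set Y := Pz r (- k) t; clearbody X Y => h nz.
rewrite -[Cinv X]Cmult_1_r -h; field; done.
Qed.

Lemma circ_Pz r t : circ r t = Pz r 1 t.
Proof.
rewrite /circ /Pz /E /= Rmult_1_l Rmult_1_r /Cmult /=.
apply: injective_projections => /=; ring.
Qed.

Lemma Cpow_Pz r t (k : nat) : r <> 0 -> Cpow (circ r t) k = Pz r (Z.of_nat k) t.
Proof.
move=> r0; elim: k => [|k IH]; first by rewrite Pz0.
by rewrite Cpow_S IH circ_Pz Pz_mul //; congr Pz; lia.
Qed.

Lemma Cpow_ratio r t (k l : nat) : r <> 0 ->
  Cmult (Cpow (circ r t) k) (Cinv (Cpow (circ r t) l)) =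
  Cmult (RtoC (powerRZ r (Z.of_nat k - Z.of_nat l))) (E (Z.of_nat k - Z.of_nat l) t).
Proof.
move=> r0; rewrite !Cpow_Pz // Pz_inv // Pz_mul //.
Qed.

Lemma circ_nz r t : r <> 0 -> circ r t <> RtoC 0.
Proof. by move=> r0; rewrite circ_Pz; apply: Pz_nz. Qed.

Lemma Cpow_circ_nz r t k : r <> 0 -> Cpow (circ r t) k <> RtoC 0.
Proof. by move=> r0; rewrite Cpow_Pz //; apply: Pz_nz. Qed.

Lemma is_RInt_bigC (I : Type) (s : seq I) (F : I -> R -> C) (V : I -> C) a b :
  (forall i, is_RInt (V := C_R_CompleteNormedModule) (F i) a b (V i)) ->
  is_RInt (V := C_R_CompleteNormedModule)
    (fun t => \big[Cplus/RtoC 0]_(i <- s) F i t) a b (\big[Cplus/RtoC 0]_(i <- s) V i).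
Proof.
move=> H; elim: s => [|x s IH].
  apply: (is_RInt_ext (fun _ => RtoC 0)); first by move=> t _; rewrite big_nil.
  rewrite big_nil.
  have := is_RInt_const (V := C_R_CompleteNormedModule) a b (RtoC 0).
  by rewrite scal_zero_r.
apply: (is_RInt_ext (fun t => plus (F x t) (\big[Cplus/RtoC 0]_(i <- s) F i t))).
  by move=> t _; rewrite big_cons.
rewrite big_cons; exact: is_RInt_plus.
Qed.

Lemma circ_int_sum r (f : C -> C) n m (al : 'I_n -> 'I_m -> C) (z : 'I_n -> 'I_m -> Z) :
  (forall t, Cmult (f (circ r t)) (Cmult Ci (circ r t)) =
     \big[Cplus/RtoC 0]_(i < n) \big[Cplus/RtoC 0]_(j < m) Cmult (al i j) (E (z i j) t)) ->
  circle_integral r f =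
  \big[Cplus/RtoC 0]_(i < n) \big[Cplus/RtoC 0]_(j < m) Cmult (al i j) (I2 (z i j)).
Proof.
move=> H; rewrite /circle_integral.
rewrite (@RInt_ext C_R_CompleteNormedModule _ (fun t => \big[Cplus/RtoC 0]_(i < n) \big[Cplus/RtoC 0]_(j < m) Cmult (al i j) (E (z i j) t))); last by move=> x _; exact: H.
apply: (@is_RInt_unique C_R_CompleteNormedModule).
apply: is_RInt_bigC => i; apply: is_RInt_bigC => j.
apply: is_RInt_Cmult; exact: is_RInt_E.
Qed.

Definition zd (a b : nat) : Z := (Z.of_nat a - Z.of_nat b)%Z.

Lemma inner_pt n (i j : nat) (cf : 'I_n -> 'I_n -> C) (Q b : C) r1 t :
  r1 <> 0 -> b <> RtoC 0 -> Cpow b j <> RtoC 0 ->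
  Cmult (Cdiv (Cdiv (Cdiv (Cmult Q
     (\big[Cplus/RtoC 0]_(i' < n) \big[Cplus/RtoC 0]_(j' < n)
        Cmult (cf i' j') (Cmult (Cpow (circ r1 t) i') (Cpow b j'))))
     (Cmult (Cpow (circ r1 t) i) (Cpow b j))) (circ r1 t)) b) (Cmult Ci (circ r1 t))
  = \big[Cplus/RtoC 0]_(i' < n) \big[Cplus/RtoC 0]_(j' < n)
      Cmult (Cmult (Cmult (Cmult (Cmult (Cmult (Cmult (cf i' j') Q) Ci) (Cpow b j')) (Cinv (Cpow b j))) (Cinv b))
               (RtoC (powerRZ r1 (zd i' i)))) (E (zd i' i) t).
Proof.
move=> r0 b0 bj0.
have w0 := circ_nz r1 t r0.
have wi0 := Cpow_circ_nz r1 t i r0.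
set w := circ r1 t in w0 wi0 *.
set G := \big[Cplus/RtoC 0]_(i' < n) \big[Cplus/RtoC 0]_(j' < n) Cmult (cf i' j') (Cmult (Cpow w i') (Cpow b j')).
set K := Cmult (Cmult (Cmult (Cmult Q (Cinv (Cmult (Cpow w i) (Cpow b j)))) (Cinv w)) (Cinv b)) (Cmult Ci w).
transitivity (Cmult G K).
  rewrite /K /Cdiv; move: w0 wi0 b0 bj0; set X := Cpow w i; set Y := Cpow b j.
  clearbody G X Y w => w0 wi0 b0 bj0; clear K; field; auto.
rewrite /G big_distrl /=; apply: eq_bigr => i' _.
rewrite big_distrl /=; apply: eq_bigr => j' _.
have hr := Cpow_ratio r1 t i' i r0; fold w in hr.
rewrite /zd -[in RHS]Cmult_assoc -hr /K.
move: w0 wi0 b0 bj0; set X := Cpow w i; set Y := Cpow b j; set X' := Cpow w i'; set Y' := Cpow b j'.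
clearbody X Y X' Y' w => w0 wi0 b0 bj0.
field; auto.
Qed.

Lemma outer_pt n (i j : nat) (cf : 'I_n -> 'I_n -> C) (Q : C) r1 r2 s :
  r2 <> 0 ->
  Cmult (\big[Cplus/RtoC 0]_(i' < n) \big[Cplus/RtoC 0]_(j' < n)
      Cmult (Cmult (Cmult (Cmult (Cmult (Cmult (Cmult (cf i' j') Q) Ci) (Cpow (circ r2 s) j'))
          (Cinv (Cpow (circ r2 s) j))) (Cinv (circ r2 s)))
               (RtoC (powerRZ r1 (zd i' i)))) (I2 (zd i' i)))
    (Cmult Ci (circ r2 s))
  = \big[Cplus/RtoC 0]_(i' < n) \big[Cplus/RtoC 0]_(j' < n)
      Cmult (Cmult (Cmult (Cmult (Cmult (Cmult (cf i' j') Q) Ci) (RtoC (powerRZ r1 (zd i' i))))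
           (I2 (zd i' i))) (Cmult Ci (RtoC (powerRZ r2 (zd j' j))))) (E (zd j' j) s).
Proof.
move=> r0.
have w0 := circ_nz r2 s r0.
have wi0 := Cpow_circ_nz r2 s j r0.
rewrite big_distrl /=; apply: eq_bigr => i' _.
rewrite big_distrl /=; apply: eq_bigr => j' _.
have hr := Cpow_ratio r2 s j' j r0.
set w := circ r2 s in w0 wi0 hr *.
rewrite (_ : forall x y z, Cmult (Cmult x (Cmult Ci y)) z = Cmult (Cmult x Ci) (Cmult y z)); last first.
  by move=> x y z; ring.
rewrite /zd -hr.
move: w0 wi0; set X := Cpow w j; set X' := Cpow w j'; set R1' := RtoC (powerRZ _ _); set I' := I2 _.
clearbody X X' R1' I' w => w0 wi0; field; auto.
Qed.

Lemma collapse1 n (F : 'I_n -> C) (i0 : 'I_n) :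
  (forall i, i != i0 -> F i = RtoC 0) -> \big[Cplus/RtoC 0]_(i < n) F i = F i0.
Proof.
move=> H; rewrite (bigD1 i0) //= big1; first by rewrite Cplus_0_r.
by move=> i hi; apply: H.
Qed.

Lemma collapse n (F : 'I_n -> 'I_n -> C) (i0 j0 : 'I_n) :
  (forall i' j', (i' != i0) || (j' != j0) -> F i' j' = RtoC 0) ->
  \big[Cplus/RtoC 0]_(i' < n) \big[Cplus/RtoC 0]_(j' < n) F i' j' = F i0 j0.
Proof.
move=> H; rewrite (@collapse1 n _ i0).
  by apply: (@collapse1 n _ j0) => j' hj; apply: H; rewrite hj orbT.
by move=> i' hi; apply: big1 => j' _; apply: H; rewrite hi.
Qed.

Lemma I2_ne (a b : nat) : a <> b -> I2 (zd a b) = RtoC 0.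
Proof. by move=> h; rewrite /I2 /zd; case: Z.eqb_spec => // ?; lia. Qed.

Lemma I2_eq (a : nat) : I2 (zd a a) = RtoC (2 * PI).
Proof. by rewrite /I2 /zd Z.sub_diag. Qed.

Lemma powerRZ_zd r a : powerRZ r (zd a a) = 1.
Proof. by rewrite /zd Z.sub_diag. Qed.

Lemma Ci_nz : Ci <> RtoC 0.
Proof. by move=> /pair_equal_spec[] /=; lra. Qed.

Lemma twopi_nz : RtoC (2 * PI) <> RtoC 0.
Proof. move=> /pair_equal_spec[] /= h _; have := PI_RGT_0; lra. Qed.

End Helpers.

(* Gamma_0: any circle |z| = r around the origin (r1 for w, r2 for b). *)
Theorem lemma5p4 (n i j : nat) (a q r1 r2 : R) :
  (i < n)%N -> (j < n)%N -> (0 < a)%R -> (0 < q)%R ->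
  (0 < r1)%R -> (0 < r2)%R ->
  RtoC (Zcol i j a q n / Zcol_n n a q)%R =
  Cmult (Cinv (Cpow (Cmult (RtoC (2 * PI)) Ci) 2))
    (circle_integral r2 (fun b =>
       circle_integral r1 (fun w =>
         Cdiv (Cdiv
           (Cdiv (Cmult (RtoC (powerRZ q (Z.of_nat ((i + 1) ^ 2 + j))))
                        (GdiagNE n w b a q))
                 (Cmult (Cpow w i) (Cpow b j)))
           w) b))).
Proof.
move=> hi hj a0 q0 r10 r20.
have r1n : r1 <> IZR 0 by lra.
have r2n : r2 <> IZR 0 by lra.
rewrite ratio //.
set Q := RtoC (powerRZ q (Z.of_nat ((i + 1) ^ 2 + j))).
set cf := fun (i' j' : 'I_n) => RtoC (Zdiag i' j' a q n / Zdiag_n n a q).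
rewrite (circ_int_sum r2 _ n n (fun i' j' =>
   Cmult (Cmult (Cmult (Cmult (Cmult (cf i' j') Q) Ci) (RtoC (powerRZ r1 (zd i' i))))
           (I2 (zd i' i))) (Cmult Ci (RtoC (powerRZ r2 (zd j' j))))) (fun i' j' => zd j' j)); last first.
  move=> s.
  rewrite (circ_int_sum r1 _ n n (fun i' j' =>
     Cmult (Cmult (Cmult (Cmult (Cmult (Cmult (cf i' j') Q) Ci) (Cpow (circ r2 s) j'))
          (Cinv (Cpow (circ r2 s) j))) (Cinv (circ r2 s))) (RtoC (powerRZ r1 (zd i' i))))
     (fun i' j' => zd i' i)); last first.
    move=> t; rewrite /GdiagNE.
    exact: (inner_pt n i j cf Q (circ r2 s) r1 t r1n (circ_nz r2 s r2n) (Cpow_circ_nz r2 s j r2n)).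
  exact: (outer_pt n i j cf Q r1 r2 s r2n).
rewrite (@collapse n _ (Ordinal hi) (Ordinal hj)); last first.
  move=> i' j' /orP[h|h].
    rewrite I2_ne; first by ring.
    by move=> e; move/eqP: h; apply; apply: val_inj.
  rewrite (I2_ne j'); first by ring.
  by move=> e; move/eqP: h; apply; apply: val_inj.
rewrite /= !I2_eq !powerRZ_zd /cf /Q !RtoC_mult.
have := Ci_nz; have := twopi_nz.
set X := RtoC (2 * PI).
move=> h1 h2; field; split; first done.
by move=> /pair_equal_spec[] /= h _; have := PI_RGT_0; rewrite /PI; lra.
Qed.
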